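(* Let $C$ be a connected $2$-dimensional unoriented resolution configuration, and let $F_C: V_0(C)\to V_1(C)$ be a non-zero associated map of bidegree $(2,4)$ such that the assignment $C\mapsto F_C$ satisfies the naturality rule, the disoriented rule, the filtration rule and the duality rule. Then $C$ is a tree or a dual tree (i.e. $F_C$ would have to be zero otherwise), and: if $C$ is a tree with starting circles $x_1,x_2,x_3$ and ending circle $y$, then $F_C(x_1x_2x_3)=y$ and $F_C$ vanishes on all other monomials; if $C$ is a dual tree with starting circle $x$ and ending circles $y_1,y_2,y_3$, then $F_C(1)=1\otimes1\otimes1$ and $F_C(x)=0$.
   Context: A $k$-dimensional resolution configuration $C$ is a finite set of pairwise disjoint embedded circles $x_1,\dots,x_t$ in $S^2$ together with $k$ embedded arcs $\gamma_1,\dots,\gamma_k$ which are pairwise disjoint, whose endpoints lie on the circles and whose interiors are disjoint from the circles. It is oriented if the arcs are oriented, and unoriented otherwise. The circles $x_i$ are the starting circles; the ending circles $y_1,\dots,y_s$ are obtained from the starting circles by performing surgery along all arcs. The dual configuration $C^*$ consists of the ending circles together with the dual arcs $\gamma_i^*$ obtained by rotating $\gamma_i$ by $90$ degrees counterclockwise (so the starting circles of $C^*$ are the ending circles of $C$ and vice versa). Writing $S^2=\mathbb{R}^2\cup\{\infty\}$, the mirror $m(C)$ is the reflection of $C$ in $\mathbb{R}\times\{0\}$. $C$ is connected if the graph whose vertices are the circles and whose edges are the arcs is connected. A connected $k$-dimensional configuration is a tree if it has exactly $k+1$ starting circles and one ending circle; a dual tree is the dual of a tree (one starting circle, $k+1$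 ending circles). Set $V_0(C)=\bigotimes_{i=1}^t\mathbb{F}_2[x_i]/(x_i^2)$ and $V_1(C)=\bigotimes_{j=1}^s\mathbb{F}_2[y_j]/(y_j^2)$, with basis of monomials (products of circle variables). Quantum grading: in each factor $\mathrm{gr}_q(1)=1$, $\mathrm{gr}_q(x)=-1$, added over tensor factors; for a $k$-dimensional configuration the quantum grading of monomials of $V_1(C)$ is additionally shifted up by $k$. A linear map $F_C:V_0(C)\to V_1(C)$ for a $k$-dimensional $C$ has bidegree $(k,p)$ if it sends each monomial to a linear combination of monomials whose quantum grading exceeds that of the source by $p$. Rules for an assignment $C\mapsto F_C$: (Naturality) if an orientation-preserving diffeomorphism of $S^2$ sends $C$ to $C'$, then $F_C=F_{C'}$ under the induced identifications $V_0(C)=V_0(C')$, $V_1(C)=V_1(C')$. (Disoriented) if $C,C'$ differ only in the orientations of arcs, $F_C=F_{C'}$. (Duality) using the canonical identifications $V_0(m(C^* ))=V_1(C)$ and $V_1(m(C^* ))=V_0(C)$ and the involution $a\mapsto a^*$ on monomials induced by $1^*=z$, $z^*=1$ in each factor $\mathbb{F}_2[z]/(z^2)$, for all monomials $a\in V_0(C)$, $b\in V_1(C)$ the coefficient of $b$ in $F_C(a)$ equals the coefficient of $a^*$ in $F_{m(C^* )}(b^* )$. (Filtration) for a point $P$ on the starting circles, let $x(P)$, $y(P)$ be the starting and ending circles containing $P$; if a monomial $a$ is divisible by $x(P)$ and the coefficient of a monomial $b$ in $F_C(a)$ is non-zero, then $b$ is divisible by $y(P)$. *)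

(* Defs.v *)
(* Combinatorial model of connected 2-dimensional
   unoriented resolution configurations via rotation systems. *)
From mathcomp Require Import all_boot all_order all_fingroup all_algebra.
Set Implicit Arguments. Unset Strict Implicit. Unset Printing Implicit Defensive.

(* The union of circles and arcs of a connected 2-dimensional configuration is
   a planar graph with 4 trivalent vertices (the arc endpoints), hence 12 darts
   (half-edges). *)
Notation dart := 'I_12.

(* A configuration (raw data):
   - [alpha] : the edge involution (the other end of the same edge),
   - [sigma] : the rotation at a vertex (next dart counterclockwise),
   - [arc]   : the darts that are (halves of) arcs; the other darts are
               (halves of) circle segments. *)
Record rconf := RConf {
  alpha : dart -> dart;
  sigma : dart -> dart;
  arc : {set dart}
}.

Definition sigmaV (C : rconf) (d : dart) : dart := sigma C (sigma C d).

Definition adj (C : rconf) : rel dart :=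
  [rel x y | (y == alpha C x) || (y == sigma C x)].

Definition face_perm (C : rconf) (d : dart) : dart := sigma C (alpha C d).

Definition nfaces (C : rconf) : nat :=
  #|[set [set e | fconnect (face_perm C) d e] | d : dart]|.

(* Validity: a connected planar (genus 0, Euler: 4 - 6 + 4 = 2) embedded
   trivalent graph, each vertex being an arc endpoint carrying exactly one arc
   dart and two circle darts. *)
Definition valid (C : rconf) : Prop :=
  (forall d, alpha C (alpha C d) = d /\ alpha C d != d) /\
  [/\ forall d, sigma C (sigma C (sigma C d)) = d /\ sigma C d != d,
      forall d, ((d \in arc C) + (sigma C d \in arc C)
                 + (sigma C (sigma C d) \in arc C))%N = 1%N,
      forall d, (alpha C d \in arc C) = (d \in arc C),
      forall x y, connect (adj C) x y
    & nfaces C = 4%N].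

Definition other (C : rconf) (e : dart) : dart :=
  if sigma C e \in arc C then sigmaV C e else sigma C e.

(* successor of a circle dart along the surgered (ending) circles *)
Definition tau (C : rconf) (e : dart) : dart :=
  let f := alpha C e in
  if sigma C f \in arc C then sigma C (alpha C (sigma C f))
  else sigmaV C (alpha C (sigmaV C f)).

Definition srel (C : rconf) : rel dart :=
  [rel x y | (y == alpha C x) || (y == other C x)].
Definition erel (C : rconf) : rel dart :=
  [rel x y | (y == alpha C x) || (y == tau C x)].

(* A circle is represented by the set of circle darts lying on it. *)
Definition startcirc (C : rconf) (e : dart) : {set dart} :=
  [set x | connect (srel C) e x].
Definition endcirc (C : rconf) (e : dart) : {set dart} :=
  [set x | connect (erel C) e x].

Definition startC (C : rconf) : {set {set dart}} :=
  [set startcirc C e | e in ~: arc C].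
Definition endC (C : rconf) : {set {set dart}} :=
  [set endcirc C e | e in ~: arc C].

(* mirror: reverse the rotation *)
Definition mirror (C : rconf) : rconf := RConf (alpha C) (sigmaV C) (arc C).

(* dual configuration: the dual vertex attached to the arc dart a sits on the
   copy of the arc lying in the corner (sigma^-1 a, a); its darts are a (the
   dual arc), sigma^-1 a and sigma (alpha a) (ending-circle darts). *)
Definition dual_sigma (C : rconf) (d : dart) : dart :=
  if d \in arc C then sigmaV C d
  else if sigma C d \in arc C then sigma C (alpha C (sigma C d))
  else alpha C (sigmaV C d).

Definition dualc (C : rconf) : rconf := RConf (alpha C) (dual_sigma C) (arc C).

(* Monomials of V_0(C) (resp. V_1(C)) are subsets of startC C (resp. endC C);
   an assignment gives, for each configuration C and monomials a, b, the
   coefficient (in F_2) of b in F_C(a). *)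
Definition assignment := rconf -> {set {set dart}} -> {set {set dart}} -> bool.

(* orientation-preserving diffeomorphisms = isomorphisms of rotation systems *)
Definition iso (C C' : rconf) (p : {perm dart}) : Prop :=
  forall d, [/\ p (alpha C d) = alpha C' (p d),
               p (sigma C d) = sigma C' (p d)
             & (p d \in arc C') = (d \in arc C)].

Definition imgS (p : {perm dart}) (A : {set {set dart}}) : {set {set dart}} :=
  [set (p @: X : {set dart}) | X : {set dart} in A].

Definition naturality (F : assignment) : Prop :=
  forall C C' p, valid C -> valid C' -> iso C C' p ->
  forall a b : {set {set dart}}, a \subset startC C -> b \subset endC C ->
    F C a b = F C' (imgS p a) (imgS p b).

(* a^star = complement monomial; V_0(m(dual C)) = V_1(C) and
   V_1(m(dual C)) = V_0(C): as sets of circles (sets of darts), these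
   identifications are literal equalities in this model. *)
Definition duality (F : assignment) : Prop :=
  forall C, valid C ->
  forall a b : {set {set dart}}, a \subset startC C -> b \subset endC C ->
    F C a b = F (mirror (dualc C)) (endC C :\: b) (startC C :\: a).

(* a point P on a starting circle, in the interior of the circle segment of
   the circle dart e *)
Definition filtration (F : assignment) : Prop :=
  forall C, valid C ->
  forall (a b : {set {set dart}}) e, a \subset startC C -> b \subset endC C -> e \notin arc C ->
    startcirc C e \in a -> F C a b -> endcirc C e \in b.

Local Open Scope ring_scope.
Definition qgr0 (C : rconf) (a : {set {set dart}}) : int :=
  (#|startC C|%:Z - (2 * #|a|)%:Z).
(* shifted up by k = 2 *)
Definition qgr1 (C : rconf) (b : {set {set dart}}) : int :=
  (#|endC C|%:Z - (2 * #|b|)%:Z + 2).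
Local Close Scope ring_scope.

Definition bidegree24 (F : assignment) (C : rconf) : Prop :=
  forall a b : {set {set dart}}, a \subset startC C -> b \subset endC C -> F C a b ->
    qgr1 C b = (qgr0 C a + 4)%R.

Definition nonzero_at (F : assignment) (C : rconf) : Prop :=
  exists a b : {set {set dart}}, [/\ a \subset startC C, b \subset endC C & F C a b].

Definition is_tree (C : rconf) : bool := (#|startC C| == 3) && (#|endC C| == 1).
Definition is_dual_tree (C : rconf) : bool := (#|startC C| == 1) && (#|endC C| == 3).

(* Main.v *)
From Pilot Require Import Defs.
From mathcomp Require Import all_boot all_order all_fingroup all_algebra.
From mathcomp Require Import zify.
From Stdlib Require Import FunctionalExtensionality.
Set Implicit Arguments. Unset Strict Implicit. Unset Printing Implicit Defensive.
Import Pilot.Defs.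

Definition dd (n : nat) : dart := Ordinal (ltn_pmod n (isT : 0 < 12)).
Definition dL : seq dart := [seq dd i | i <- iota 0 12].
Definition isarc (d : dart) : bool := (val d %% 3 == 0)%N.
Definition sigma0 (x : dart) : dart :=
  dd (if (val x %% 3 == 2)%N then (val x - 2)%N else (val x).+1).
Definition circL : seq dart := [seq x <- dL | ~~ isarc x].

Fixpoint reachn (n : nat) (f g : dart -> dart) (L : seq dart) : seq dart :=
  if n is n'.+1 then reachn n' f g (undup (L ++ map f L ++ map g L)) else L.
Definition reach f g e := reachn 12 f g [:: e].
Definition rep f g e := let R := reach f g e in nth e [seq x <- dL | x \in R] 0.
Definition closedR (f g : dart -> dart) (R : seq dart) :=
  all (fun x => (f x \in R) && (g x \in R)) R.

Definition other0 (e : dart) : dart :=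
  if isarc (sigma0 e) then sigma0 (sigma0 e) else sigma0 e.
Definition tau0 (a : dart -> dart) (e : dart) : dart :=
  let f := a e in
  if isarc (sigma0 f) then sigma0 (a (sigma0 f))
  else sigma0 (sigma0 (a (sigma0 (sigma0 f)))).

Definition repok f g :=
  all (fun e => let r := rep f g e in (r \in reach f g e) && (e \in reach f g r)) circL.
Definition nreps f g := size (undup [seq rep f g e | e <- circL]).

Definition bound_ok (a : dart -> dart) :=
  [&& (nreps a other0 + nreps a (tau0 a) <= 4)%N, repok a other0 & repok a (tau0 a)].

Definition leaf (a : dart -> dart) :=
  let R := reach a sigma0 (dd 0) in
  if dd 6 \in R then bound_ok a else (dd 6 \notin R) && closedR a sigma0 R.

Definition mka (v1 v2 v4 v5 v7 v8 v10 v11 : dart) (x : dart) : dart :=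
  match val x with
  | 0 => dd 3 | 1 => v1 | 2 => v2 | 3 => dd 0 | 4 => v4 | 5 => v5
  | 6 => dd 9 | 7 => v7 | 8 => v8 | 9 => dd 6 | 10 => v10 | _ => v11 end.

Definition okv (k v : dart) (prev : seq (dart * dart)) :=
  [&& ~~ isarc v, v != k & all (fun jv => (v != jv.2) && ((jv.2 == k) == (v == jv.1))) prev].

Definition bigcheck :=
  all (fun v1 => if okv (dd 1) v1 [::] then
  all (fun v2 => if okv (dd 2) v2 [:: (dd 1, v1)] then
  all (fun v4 => if okv (dd 4) v4 [:: (dd 1, v1); (dd 2, v2)] then
  all (fun v5 => if okv (dd 5) v5 [:: (dd 1, v1); (dd 2, v2); (dd 4, v4)] then
  all (fun v7 => if okv (dd 7) v7 [:: (dd 1, v1); (dd 2, v2); (dd 4, v4); (dd 5, v5)] then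
  all (fun v8 => if okv (dd 8) v8 [:: (dd 1, v1); (dd 2, v2); (dd 4, v4); (dd 5, v5); (dd 7, v7)] then
  all (fun v10 => if okv (dd 10) v10 [:: (dd 1, v1); (dd 2, v2); (dd 4, v4); (dd 5, v5); (dd 7, v7); (dd 8, v8)] then
  all (fun v11 => if okv (dd 11) v11 [:: (dd 1, v1); (dd 2, v2); (dd 4, v4); (dd 5, v5); (dd 7, v7); (dd 8, v8); (dd 10, v10)] then
  leaf (mka v1 v2 v4 v5 v7 v8 v10 v11) else true) dL else true) dL else true) dL else true) dL else true) dL else true) dL else true) dL else true) dL.


Lemma bigcheckP : bigcheck.
Proof. by vm_compute. Qed.

Lemma mem_dL (x : dart) : x \in dL.
Proof.
apply/mapP; exists (val x); first by rewrite mem_iota /= ltn_ord.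
by apply: val_inj; rewrite /= modn_small.
Qed.

Definition relfg (f g : dart -> dart) : rel dart := [rel x y | (y == f x) || (y == g x)].

Lemma reach_sound f g e n L :
  (forall y, y \in L -> connect (relfg f g) e y) ->
  forall y, y \in reachn n f g L -> connect (relfg f g) e y.
Proof.
elim: n L => [|n IH] L HL y /=; first exact: HL.
apply: IH => z.
rewrite mem_undup !mem_cat => /orP[/HL //|/orP[]] /mapP[w /HL Hw ->];
  apply: connect_trans Hw (connect1 _); by rewrite /relfg /= eqxx ?orbT.
Qed.

Lemma reach_sub f g n L y : y \in L -> y \in reachn n f g L.
Proof.
elim: n L => [|n IH] L /= Hy //; apply: IH; by rewrite mem_undup mem_cat Hy.
Qed.

Lemma reach_self f g e : e \in reach f g e.
Proof. exact: reach_sub (mem_head _ _). Qed.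

Lemma reachP f g e y : y \in reach f g e -> connect (relfg f g) e y.
Proof.
apply: reach_sound => z; rewrite inE => /eqP ->; exact: connect0.
Qed.

Lemma closedR_connect f g R x y : closedR f g R -> x \in R ->
  connect (relfg f g) x y -> y \in R.
Proof.
move=> /allP cl Hx /connectP[p pth ->]; elim: p x Hx pth => //= z p IH x Hx.
case/andP=> /orP[] /eqP -> Hp; apply: IH Hp; by case/andP: (cl x Hx).
Qed.

Lemma connect_map (r r' : rel dart) (h : dart -> dart) :
  (forall u v, r u v -> r' (h u) (h v)) ->
  forall u v, connect r u v -> connect r' (h u) (h v).
Proof.
move=> Hr u v /connectP[p pth ->]; elim: p u pth => [|z p IH] u /=.
  by move=> _; exact: connect0.
case/andP=> Huz /IH; apply: connect_trans; exact/connect1/Hr.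
Qed.

Section Std.
Variable C : rconf.
Hypothesis vC : valid C.
Local Notation s := (sigma C).
Local Notation al := (alpha C).

Lemma al_inv d : al (al d) = d. Proof. by case: vC => H _; case: (H d). Qed.
Lemma al_fpf d : al d != d. Proof. by case: vC => H _; case: (H d). Qed.
Lemma s3 d : s (s (s d)) = d. Proof. by case: vC => _ [H _ _ _ _]; case: (H d). Qed.
Lemma one d : ((d \in arc C) + (s d \in arc C) + (s (s d) \in arc C))%N = 1%N.
Proof. by case: vC => _ [_ H _ _ _]. Qed.
Lemma al_arc d : (al d \in arc C) = (d \in arc C).
Proof. by case: vC => _ [_ _ H _ _]. Qed.

Lemma arc_s a : a \in arc C -> (s a \notin arc C) && (s (s a) \notin arc C).
Proof. by move=> Ha; move: (one a); rewrite Ha; case: (s a \in arc C); case: (s (s a) \in arc C). Qed.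

Lemma s_inj : injective s.
Proof. by move=> x y /(congr1 (fun z => s (s z))); rewrite !s3. Qed.

Lemma claim a a' j j' : a \in arc C -> a' \in arc C -> (j < 3)%N -> (j' < 3)%N ->
  iter j s a = iter j' s a' -> a = a' /\ j = j'.
Proof.
move=> Ha Ha' Hj Hj'.
have /andP[n1 n2] := arc_s Ha; have /andP[n1' n2'] := arc_s Ha'.
case: j Hj => [|[|[|//]]] _; case: j' Hj' => [|[|[|//]]] _ /= E.
- by [].
- by rewrite E in Ha; rewrite Ha in n1'.
- by rewrite E in Ha; rewrite Ha in n2'.
- by rewrite -E in Ha'; rewrite Ha' in n1.
- by split => //; apply: s_inj.
- by move: (congr1 (fun z => s (s z)) E); rewrite !s3 => E'; rewrite E' in Ha; rewrite Ha in n1'.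
- by rewrite -E in Ha'; rewrite Ha' in n2.
- by move: (congr1 (fun z => s (s z)) E); rewrite !s3 => E'; rewrite -E' in Ha'; rewrite Ha' in n1.
- by split => //; apply: s_inj; apply: s_inj.
Qed.

Lemma std_form : exists Q : {perm dart}, [/\ forall x, Q (sigma0 x) = s (Q x),
  forall x, (Q x \in arc C) = isarc x, al (Q (dd 0)) = Q (dd 3) & al (Q (dd 6)) = Q (dd 9)].
Proof.
have [a0 Ha0] : exists a0, a0 \in arc C.
  move: (one (dd 0)); case E0: (dd 0 \in arc C); first by exists (dd 0).
  case E1: (s (dd 0) \in arc C); first by exists (s (dd 0)).
  case E2: (s (s (dd 0)) \in arc C); first by exists (s (s (dd 0))).
  by [].
pose a1 := al a0.
have Ha1 : a1 \in arc C by rewrite al_arc.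
have [a2 [Ha2 n20 n21]] : exists a2, [/\ a2 \in arc C, a2 != a0 & a2 != a1].
  case: (pickP (fun x => (x \in arc C) && (x != a0) && (x != a1))) => [x /andP[/andP[]]|H].
    by move=> *; exists x.
  exfalso.
  have sub : [set: dart] \subset [set x in [:: a0; s a0; s (s a0); a1; s a1; s (s a1)]].
    apply/subsetP => d _; rewrite inE.
    have Hd z : z \in arc C -> (z == a0) || (z == a1).
      by move=> Hz; move: (H z); rewrite Hz /= => /negbT; rewrite negb_and !negbK.
    move: (one d); case E0: (d \in arc C).
      by move=> _; case/orP: (Hd _ E0) => /eqP ->; rewrite !inE eqxx ?orbT.
    case E1: (s d \in arc C) => /=.
      move=> _; have Ed : d = s (s (s d)) by rewrite s3.
      by case/orP: (Hd _ E1) => /eqP E; rewrite Ed E !inE eqxx ?orbT.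
    case E2: (s (s d) \in arc C) => //= _.
    have Ed : d = s (s (s d)) by rewrite s3.
    by case/orP: (Hd _ E2) => /eqP E; rewrite Ed E !inE eqxx ?orbT.
  move: (subset_leq_card sub); rewrite cardsT card_ord cardsE => H12.
  by move: (leq_trans H12 (card_size _)).
pose a3 := al a2.
have Ha3 : a3 \in arc C by rewrite al_arc.
pose l := [:: a0; a1; a2; a3].
have ul : uniq l.
  rewrite /l /= !inE !negb_or.
  have n10 : a1 != a0 by exact: al_fpf.
  have n32 : a3 != a2 by exact: al_fpf.
  have n30 : a3 != a0.
    by apply/eqP => E; move: n21; rewrite /a1 -E /a3 al_inv eqxx.
  have n31 : a3 != a1.
    by apply/eqP => E; move: n20; rewrite -(al_inv a2) -/a3 E /a1 al_inv eqxx.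
  by rewrite (eq_sym a0 a1) (eq_sym a0 a2) (eq_sym a0 a3) (eq_sym a1 a2) (eq_sym a1 a3) (eq_sym a2 a3) n10 n20 n21 n30 n31 n32.
have Hl i : nth a0 l i \in arc C.
  by case: i => [|[|[|[|i]]]] //=; rewrite nth_nil.
pose q (x : dart) := iter (x %% 3) s (nth a0 l (x %/ 3)).
have q_inj : injective q.
  move=> x y /claim [] // ; try by rewrite ltn_mod.
  move=> E1 E2; apply: val_inj => /=.
  have lx : (x %/ 3 < size l)%N by rewrite /=; have := ltn_ord x; lia.
  have ly : (y %/ 3 < size l)%N by rewrite /=; have := ltn_ord y; lia.
  move/eqP: E1; rewrite nth_uniq // => /eqP E1.
  by rewrite (divn_eq x 3) (divn_eq y 3) E1 E2.
have Hq j i : (j < 3)%N -> (iter j s (nth a0 l i) \in arc C) = (j == 0%N).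
  case: j => [|[|[|//]]] _ /=; first exact: Hl.
    by case/andP: (arc_s (Hl i)) => /negbTE.
  by case/andP: (arc_s (Hl i)) => _ /negbTE.
exists (perm q_inj); split.
- move=> [m Hm]; rewrite !permE.
  have -> : Ordinal Hm = dd m by apply: val_inj; rewrite /= modn_small.
  do 12 (case: m Hm => [|m] Hm; first by first [reflexivity | exact: (esym (s3 _))]).
  by [].
- move=> x; rewrite permE /q /isarc; apply: Hq; exact: ltn_mod.
- by rewrite !permE.
- by rewrite !permE.
Qed.
End Std.

Lemma okv_a (a : dart -> dart) : (forall x, a (a x) = x) -> (forall x, a x != x) ->
  (forall x, isarc (a x) = isarc x) -> forall k prev, ~~ isarc k ->
  all (fun j => j != k) prev -> okv k (a k) [seq (j, a j) | j <- prev].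
Proof.
move=> inv fpf arcp k prev Hk Hp; rewrite /okv arcp Hk fpf /=.
apply/allP => /= jv /mapP [j Hj ->] /=.
have Hjk : j != k by move/allP: Hp => /(_ j Hj).
apply/andP; split.
  by apply: contra Hjk => /eqP E; rewrite -(inv j) -E inv.
by apply/eqP; apply/idP/idP => /eqP E; apply/eqP; rewrite -E inv.
Qed.

Lemma extract (a' : dart -> dart) (inv : forall x, a' (a' x) = x) (fpf : forall x, a' x != x)
  (arcp : forall x, isarc (a' x) = isarc x) (e0 : a' (dd 0) = dd 3) (e3 : a' (dd 3) = dd 0)
  (e6 : a' (dd 6) = dd 9) (e9 : a' (dd 9) = dd 6) : leaf a'.
Proof.
have E : forall x, a' x = mka (a' (dd 1)) (a' (dd 2)) (a' (dd 4)) (a' (dd 5))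
                              (a' (dd 7)) (a' (dd 8)) (a' (dd 10)) (a' (dd 11)) x.
  move=> [m Hm]; have -> : Ordinal Hm = dd m by apply: val_inj; rewrite /= modn_small.
  do 12 (case: m Hm => [|m] Hm; first by first [reflexivity | rewrite e0 | rewrite e3 | rewrite e6 | rewrite e9]).
  by [].
  have FE := functional_extensionality _ _ E.
  have O1 : okv (dd 1) (a' (dd 1)) [::] := @okv_a a' inv fpf arcp (dd 1) [::] isT isT.
  have O2 : okv (dd 2) (a' (dd 2)) [:: (dd 1, a' (dd 1))] := @okv_a a' inv fpf arcp (dd 2) [:: dd 1] isT isT.
  have O4 : okv (dd 4) (a' (dd 4)) [:: (dd 1, a' (dd 1)); (dd 2, a' (dd 2))]
    := @okv_a a' inv fpf arcp (dd 4) [:: dd 1; dd 2] isT isT.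
  have O5 : okv (dd 5) (a' (dd 5)) [:: (dd 1, a' (dd 1)); (dd 2, a' (dd 2)); (dd 4, a' (dd 4))]
    := @okv_a a' inv fpf arcp (dd 5) [:: dd 1; dd 2; dd 4] isT isT.
  have O7 : okv (dd 7) (a' (dd 7)) [:: (dd 1, a' (dd 1)); (dd 2, a' (dd 2)); (dd 4, a' (dd 4)); (dd 5, a' (dd 5))]
    := @okv_a a' inv fpf arcp (dd 7) [:: dd 1; dd 2; dd 4; dd 5] isT isT.
  have O8 : okv (dd 8) (a' (dd 8)) [:: (dd 1, a' (dd 1)); (dd 2, a' (dd 2)); (dd 4, a' (dd 4)); (dd 5, a' (dd 5)); (dd 7, a' (dd 7))]
    := @okv_a a' inv fpf arcp (dd 8) [:: dd 1; dd 2; dd 4; dd 5; dd 7] isT isT.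
  have O10 : okv (dd 10) (a' (dd 10)) [:: (dd 1, a' (dd 1)); (dd 2, a' (dd 2)); (dd 4, a' (dd 4)); (dd 5, a' (dd 5)); (dd 7, a' (dd 7)); (dd 8, a' (dd 8))]
    := @okv_a a' inv fpf arcp (dd 10) [:: dd 1; dd 2; dd 4; dd 5; dd 7; dd 8] isT isT.
  have O11 : okv (dd 11) (a' (dd 11)) [:: (dd 1, a' (dd 1)); (dd 2, a' (dd 2)); (dd 4, a' (dd 4)); (dd 5, a' (dd 5)); (dd 7, a' (dd 7)); (dd 8, a' (dd 8)); (dd 10, a' (dd 10))]
    := @okv_a a' inv fpf arcp (dd 11) [:: dd 1; dd 2; dd 4; dd 5; dd 7; dd 8; dd 10] isT isT.
  move: bigcheckP; rewrite /bigcheck.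
  move/allP/(_ _ (mem_dL (a' (dd 1)))); rewrite O1.
  move/allP/(_ _ (mem_dL (a' (dd 2)))); rewrite O2.
  move/allP/(_ _ (mem_dL (a' (dd 4)))); rewrite O4.
  move/allP/(_ _ (mem_dL (a' (dd 5)))); rewrite O5.
  move/allP/(_ _ (mem_dL (a' (dd 7)))); rewrite O7.
  move/allP/(_ _ (mem_dL (a' (dd 8)))); rewrite O8.
  move/allP/(_ _ (mem_dL (a' (dd 10)))); rewrite O10.
  move/allP/(_ _ (mem_dL (a' (dd 11)))); rewrite O11.
  by rewrite -FE.
Qed.

Lemma leaf_cases a : leaf a ->
  (dd 6 \in reach a sigma0 (dd 0) /\ bound_ok a) \/
  (dd 6 \notin reach a sigma0 (dd 0) /\ closedR a sigma0 (reach a sigma0 (dd 0))).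
Proof.
rewrite /leaf.
case: ifP => H L; [left | right]; first by split.
by case/andP: L.
Qed.
Lemma leaf_conn a : leaf a -> connect (relfg a sigma0) (dd 0) (dd 6) -> bound_ok a.
Proof.
case/leaf_cases => [[_ //] | [Hn Hcl] Hc].
by move: (closedR_connect Hcl (reach_self _ _ _) Hc); rewrite (negbTE Hn).
Qed.

Lemma card_imset_seq (T U : finType) (f : T -> U) (s : seq T) : (#|[set f y | y in s]| <= size s)%N.
Proof. exact: leq_trans (leq_imset_card _ _) (card_size _). Qed.

Section Main.
Variable C : rconf.
Hypothesis vC : valid C.

Lemma bound : (#|startC C| + #|endC C| <= 4)%N /\ (0 < #|startC C|)%N.
Proof.
have [Q [HQs HQa HQ0 HQ6]] := std_form vC.
pose a' x := (Q^-1)%g (alpha C (Q x)).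
have HQal x : alpha C (Q x) = Q (a' x) by rewrite /a' permKV.
have inv x : a' (a' x) = x by rewrite /a' permKV al_inv // permK.
have fpf x : a' x != x.
  apply: contra (al_fpf vC (Q x)) => /eqP E; by rewrite HQal E.
have arcp x : isarc (a' x) = isarc x by rewrite -!HQa -HQal al_arc.
have e0 : a' (dd 0) = dd 3 by rewrite /a' HQ0 permK.
have e6 : a' (dd 6) = dd 9 by rewrite /a' HQ6 permK.
have e3 : a' (dd 3) = dd 0 by rewrite -e0 inv.
have e9 : a' (dd 9) = dd 6 by rewrite -e6 inv.
have L := extract inv fpf arcp e0 e3 e6 e9.
have Qother u : Q (other0 u) = other C (Q u).
  by rewrite /other0 /other /sigmaV -!HQs HQa; case: ifP.
have Qtau u : Q (tau0 a' u) = tau C (Q u).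
  rewrite /tau0 /tau /sigmaV.
  do 4 rewrite ?HQal -?HQs ?HQa.
  by case: ifP.
have card_le (r : rel dart) g : (forall u v, relfg a' g u v -> r (Q u) (Q v)) ->
    repok a' g -> (#|[set [set x | connect r e x] | e in ~: arc C]| <= nreps a' g)%N.
  move=> Hr /allP Hrep; rewrite /nreps.
  set Ls := [seq rep a' g e0 | e0 <- circL].
  have key : forall e, e \in ~: arc C -> exists2 y, y \in undup Ls &
      [set x | connect r e x] = [set x | connect r (Q y) x].
    move=> e He.
    have Hx : (Q^-1)%g e \in circL.
      by rewrite mem_filter mem_dL andbT -HQa permKV; rewrite inE in He.
    have /andP [h1 h2] := Hrep _ Hx.
    exists (rep a' g ((Q^-1)%g e)); first by rewrite mem_undup; apply: map_f.
    have c1 := connect_map Hr (reachP h1); rewrite permKV in c1.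
    have c2 := connect_map Hr (reachP h2); rewrite permKV in c2.
    apply/setP => z; rewrite !inE; apply/idP/idP => H.
      exact: connect_trans c2 H.
    exact: connect_trans c1 H.
  clearbody Ls; move: (undup Ls) key => Lu key.
  apply: leq_trans (card_imset_seq (fun y : dart => [set x | connect r (Q y) x]) Lu).
  apply: subset_leq_card; apply/subsetP => X /imsetP [e He ->].
  have [y Hy ->] := key e He.
  exact: imset_f.
have Hc' : connect (relfg a' sigma0) (dd 0) (dd 6).
  have Hc : connect (adj C) (Q (dd 0)) (Q (dd 6)).
    by case: vC => _ [_ _ _ H _]; apply: H.
  have Hr : forall u v, adj C u v -> relfg a' sigma0 ((Q^-1)%g u) ((Q^-1)%g v).
    move=> u v; rewrite /adj /relfg /= => /orP [] /eqP ->.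
      by rewrite /a' permKV eqxx.
    by rewrite -[in sigma C u](permKV Q u) -HQs permK eqxx orbT.
  by have := connect_map Hr Hc; rewrite !permK.
have /and3P [Hn Hr1 Hr2] := leaf_conn L Hc'.
split; last first.
  rewrite card_gt0; apply/set0Pn; exists (startcirc C (Q (dd 1))).
  by apply: imset_f; rewrite inE HQa.
apply: leq_trans Hn; apply: leq_add.
  apply: card_le Hr1 => u v; rewrite /relfg /srel /= => /orP [] /eqP ->.
    by rewrite HQal eqxx.
  by rewrite Qother eqxx orbT.
apply: card_le Hr2 => u v; rewrite /relfg /erel /= => /orP [] /eqP ->.
  by rewrite HQal eqxx.
by rewrite Qtau eqxx orbT.
Qed.
End Main.

Lemma deduce (F : assignment) (C : rconf) : filtration F -> valid C -> bidegree24 F C ->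
  forall a b : {set {set dart}}, a \subset startC C -> b \subset endC C -> F C a b ->
  [/\ #|startC C| = 3%N, #|endC C| = 1%N, a = startC C & b = endC C] \/
  [/\ #|startC C| = 1%N, #|endC C| = 3%N, a = set0 & b = set0].
Proof.
move=> Hf vC Hb a b Ha Hbs HF.
have [Hts Ht0] := bound vC.
have Hq := Hb a b Ha Hbs HF; rewrite /qgr1 /qgr0 in Hq.
have Hn : (#|endC C| + 2 * #|a| = #|startC C| + 2 * #|b| + 2)%N by lia.
have la := subset_leq_card Ha; have lb := subset_leq_card Hbs.
have F1 : (0 < #|a|)%N -> (0 < #|b|)%N.
  rewrite !card_gt0 => /set0Pn [X HX].
  have /imsetP [e He EX] := subsetP Ha X HX.
  apply/set0Pn; exists (endcirc C e); apply: (Hf C vC a b e Ha Hbs) => //.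
    by rewrite inE in He.
  by rewrite -EX.
have F2 : #|a| = #|startC C| -> b = endC C.
  move=> Hc; have Ea : a = startC C by apply/eqP; rewrite eqEcard Ha Hc leqnn.
  apply/eqP; rewrite eqEsubset Hbs; apply/subsetP => Y /imsetP [e He ->].
  apply: (Hf C vC a b e Ha Hbs) => //; first by rewrite inE in He.
  by rewrite Ea; apply: imset_f.
case: (posnP #|a|) => Ha0.
  have Hb0 : #|b| = 0%N by lia.
  right; split; [lia | lia | exact: cards0_eq | exact: cards0_eq].
have Hb0 := F1 Ha0.
case: (#|a| =P #|startC C|) => Hat; last by lia.
have Eb := F2 Hat.
have Hbe : #|b| = #|endC C| by rewrite Eb.
left; split; [lia | lia | | exact: Eb].
by apply/eqP; rewrite eqEcard Ha Hat leqnn.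
Qed.

Theorem lemma3p1 (F : assignment) (C : rconf) :
  naturality F -> duality F -> filtration F ->
  valid C -> bidegree24 F C -> nonzero_at F C ->
  [/\ is_tree C || is_dual_tree C,
      is_tree C -> forall a b : {set {set dart}}, a \subset startC C -> b \subset endC C ->
        F C a b = (a == startC C) && (b == endC C)
    & is_dual_tree C -> forall a b : {set {set dart}}, a \subset startC C -> b \subset endC C ->
        F C a b = (a == set0) && (b == set0)].
Proof.
move=> _ _ Hf vC Hb [a0 [b0 [Ha0 Hb0 HF0]]].
have D := deduce Hf vC Hb Ha0 Hb0 HF0.
split.
- by rewrite /is_tree /is_dual_tree; case: D => [[-> -> _ _]|[-> -> _ _]].
- move=> /andP [/eqP Ht /eqP Hs] a b Ha Hbs; apply/idP/idP.
    move=> HF; case: (deduce Hf vC Hb Ha Hbs HF) => [[_ _ -> ->]|[Ht' _ _ _]].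
      by rewrite !eqxx.
    by rewrite Ht in Ht'.
  case/andP => /eqP -> /eqP ->.
  by case: D => [[_ _ <- <-] // | [Ht' _ _ _]]; rewrite Ht in Ht'.
- move=> /andP [/eqP Ht /eqP Hs] a b Ha Hbs; apply/idP/idP.
    move=> HF; case: (deduce Hf vC Hb Ha Hbs HF) => [[Ht' _ _ _]|[_ _ -> ->]].
      by rewrite Ht in Ht'.
    by rewrite !eqxx.
  case/andP => /eqP -> /eqP ->.
  case: D => [[Ht' _ _ _] | [_ _ Ea Eb]]; first by rewrite Ht in Ht'.
  by rewrite -{1}Ea -Eb.
Qed.
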